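(* Let $n,m,k$ be integers with $1\le k<m/2$. If $n$ and $m$ are sufficiently large, then $R_0(h_{k,n,m})=\Omega(nm)$.
   Context: Let $n,m$ be positive integers, $1\le k<m$ an integer, $M=[n]\times[m]$ (a grid of cells with $n$ rows and $m$ columns), $\tilde M=M\cup\{\bot\}$ (pointers to cells, $\bot$ the null pointer). Let $T$ be the following fixed binary tree with $m$ leaves and $m-1$ internal nodes: if $m=2^r$, $T$ is the complete binary tree with $2^r$ leaves; if $2^r<m<2^{r+1}$, take the complete binary tree with $2^r$ leaves and add a pair of children to each of its $m-2^r$ leftmost leaves. Outgoing arcs are labeled 'left'/'right', leaves labeled $1,\dots,m$ from left to right, and $T(j)$ is the sequence of labels on the root-to-leaf-$j$ path. The alphabet is $\Sigma=\{0,1\}\times\tilde M\times\tilde M\times\tilde M$ with components $\mathrm{val},\mathrm{lpoint},\mathrm{rpoint},\mathrm{ipoint}$. The function $h_{k,n,m}\colon\Sigma^M\to\{0,1\}$ has $h_{k,n,m}(x)=1$ iff: (1) there are exactly $k$ columns $b_1,\dots,b_k$ with $\mathrm{val}(x_{i,b_s})=1$ for all $i\in[n]$, $s\in[k]$ (marked columns); (2) each marked column $b_s$ contains a unique cell $a_s$ with $x_{a_s}\ne(1,\bot,\bot,\bot)$ (special elements); (3) $\mathrm{ipoint}(x_{a_s})=a_{s+1}$ for $s\in[k-1]$, $\mathrm{ipoint}(x_{a_k})=a_1$, and $\mathrm{lpoint}(x_{a_s})=\mathrm{lpoint}(x_{a_t})$, $\mathrm{rpoint}(x_{a_s})=\mathrm{rpoint}(x_{a_t})$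 for all $s,t\in[k]$; (4) for each non-marked column $j$, the path starting at a special element and following $\mathrm{lpoint},\mathrm{rpoint}$ as specified by $T(j)$ exists (no $\bot$ on it) and ends at a cell $\ell_j$ in column $j$ with $\mathrm{val}(x_{\ell_j})=0$. A query returns the symbol $x_c\in\Sigma$ of one cell. $R_0(f)$ is the minimum, over randomized decision trees always outputting $f(x)$, of the worst-case expected number of queries. *)

(* Defs.v *)
From Stdlib Require Import Reals.
From mathcomp Require Import all_boot.

Set Implicit Arguments.
Unset Strict Implicit.
Unset Printing Implicit Defensive.

(* M = [n] x [m]  (rows and columns are 0-indexed ordinals) *)
Definition cell (n m : nat) : finType := ('I_n * 'I_m)%type.

(* Sigma = {0,1} x ~M x ~M x ~M, with ~M = option M (None = the null pointer) *)
Definition sym (n m : nat) : finType :=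
  (bool * option (cell n m) * option (cell n m) * option (cell n m))%type.

Definition valS {n m} (s : sym n m) : bool := s.1.1.1.
Definition lpoint {n m} (s : sym n m) : option (cell n m) := s.1.1.2.
Definition rpoint {n m} (s : sym n m) : option (cell n m) := s.1.2.
Definition ipoint {n m} (s : sym n m) : option (cell n m) := s.2.

Definition blank {n m} : sym n m := (true, None, None, None).

Inductive btree := BLeaf | BNode of btree & btree.

Fixpoint complete (r : nat) : btree :=
  if r is r'.+1 then BNode (complete r') (complete r') else BLeaf.

(* add a pair of children to each of the t leftmost leaves;
   returns the new tree and the number of expansions still to be done *)
Fixpoint expand (t : nat) (b : btree) : btree * nat :=
  match b with
  | BLeaf => if t is t'.+1 then (BNode BLeaf BLeaf, t') else (BLeaf, 0)
  | BNode l r =>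
      let (l', t1) := expand t l in
      let (r', t2) := expand t1 r in
      (BNode l' r', t2)
  end.

(* T: with r = floor(log2 m), 2^r <= m < 2^(r+1) *)
Definition Ttree (m : nat) : btree :=
  let r := trunc_log 2 m in (expand (m - 2 ^ r) (complete r)).1.

(* root-to-leaf label sequences of the leaves, from left to right;
   false = 'left', true = 'right' *)
Fixpoint leaf_paths (b : btree) : seq (seq bool) :=
  match b with
  | BLeaf => [:: [::]]
  | BNode l r => map (cons false) (leaf_paths l) ++ map (cons true) (leaf_paths r)
  end.

(* T(j) for the column j : 'I_m, i.e. the leaf with label j+1 *)
Definition Tpath (m : nat) (j : 'I_m) : seq bool := nth [::] (leaf_paths (Ttree m)) j.

Fixpoint follow {n m} (x : cell n m -> sym n m) (c : cell n m) (p : seq bool)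
  : option (cell n m) :=
  match p with
  | [::] => Some c
  | d :: p' =>
      match (if d then rpoint (x c) else lpoint (x c)) with
      | Some c' => follow x c' p'
      | None => None
      end
  end.

Definition marked {n m} (x : cell n m -> sym n m) (j : 'I_m) : Prop :=
  forall i : 'I_n, valS (x (i, j)) = true.

Definition h_holds (k n m : nat) (x : cell n m -> sym n m) : Prop :=
  exists (b : 'I_k -> 'I_m) (a : 'I_k -> cell n m),
    injective b /\
    (forall j : 'I_m, marked x j <-> exists s, b s = j) /\
    (forall s : 'I_k,
        (a s).2 = b s /\ x (a s) <> blank /\
        (forall i : 'I_n, x (i, b s) <> blank -> i = (a s).1)) /\
    (forall s : 'I_k, ipoint (x (a s)) = Some (a (ordS s))) /\
    (forall s t : 'I_k, lpoint (x (a s)) = lpoint (x (a t)) /\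
                        rpoint (x (a s)) = rpoint (x (a t))) /\
    (forall j : 'I_m, ~ marked x j ->
       forall s : 'I_k, exists l : cell n m,
         follow x (a s) (Tpath j) = Some l /\ l.2 = j /\ valS (x l) = false).

Arguments h_holds : clear implicits.

Inductive dtree (A S : Type) :=
  | DLeaf of bool
  | DQuery of A & (S -> dtree A S).

Fixpoint dt_eval {A S} (t : dtree A S) (x : A -> S) : bool :=
  match t with
  | DLeaf b => b
  | DQuery c f => dt_eval (f (x c)) x
  end.

Fixpoint dt_cost {A S} (t : dtree A S) (x : A -> S) : nat :=
  match t with
  | DLeaf _ => 0
  | DQuery c f => (dt_cost (f (x c)) x).+1
  end.

(* a randomized decision tree: a finitely supported probability
   distribution over deterministic decision trees *)
Definition rdtree (A S : Type) := list (R * dtree A S).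

Fixpoint total_weight {A S} (D : rdtree A S) : R :=
  match D with
  | [::] => R0
  | (w, _) :: D' => Rplus w (total_weight D')
  end.

Fixpoint exp_cost {A S} (D : rdtree A S) (x : A -> S) : R :=
  match D with
  | [::] => R0
  | (w, t) :: D' => Rplus (Rmult w (INR (dt_cost t x))) (exp_cost D' x)
  end.

Definition zero_error_for {A S} (f : (A -> S) -> Prop) (D : rdtree A S) : Prop :=
  (forall wt, List.In wt D -> Rle R0 wt.1 /\
                 forall x, dt_eval wt.2 x = true <-> f x) /\
  total_weight D = R1.

(* Main.v *)
Require Import Defs.
From Stdlib Require Import Reals Lra FunctionalExtensionality.
From mathcomp Require Import all_boot zify.
Set Implicit Arguments. Unset Strict Implicit. Unset Printing Implicit Defensive.


Fixpoint qs {A S} (t : dtree A S) (x : A -> S) : seq A :=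
  match t with
  | DLeaf _ => [::]
  | DQuery c f => c :: qs (f (x c)) x
  end.

Lemma cost_qs {A S} (t : dtree A S) x : dt_cost t x = size (qs t x).
Proof. by elim: t => //= c f IH; rewrite IH. Qed.

Lemma eval_agree {A S} (t : dtree A S) (x y : A -> S) :
  (forall c, List.In c (qs t x) -> y c = x c) -> dt_eval t y = dt_eval t x.
Proof.
elim: t => //= c f IH H.
rewrite H; last by left.
apply: IH => c' Hc'; apply: H; by right.
Qed.

Definition leaves b := size (leaf_paths b).

Lemma leaves_complete r : leaves (complete r) = 2 ^ r.
Proof. elim: r => //= r IH; rewrite /leaves /= size_cat !size_map -/(leaves _) IH expnS; lia. Qed.

Lemma expand_spec b t :
  leaves (expand t b).1 = leaves b + minn t (leaves b) /\ (expand t b).2 = t - leaves b.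
Proof.
elim: b t => [|l IHl r IHr] t /=.
  case: t => [|t] /=; rewrite /leaves /=; lia.
case E1: (expand t l) => [l' t1]; case E2: (expand t1 r) => [r' t2] /=.
have [A1 B1] := IHl t; rewrite E1 /= in A1 B1.
have [A2 B2] := IHr t1; rewrite E2 /= in A2 B2.
rewrite /leaves /= !size_cat !size_map -!/(leaves _) A1 A2 B2 B1; split; lia.
Qed.

Lemma leaves_Ttree m : 0 < m -> leaves (Ttree m) = m.
Proof.
move=> m0; rewrite /Ttree.
have h1 := trunc_logP (isT : 1 < 2) m0.
have h2 := trunc_log_ltn m (isT : 1 < 2).
have [A _] := expand_spec (complete (trunc_log 2 m)) (m - 2 ^ trunc_log 2 m).
rewrite A leaves_complete; rewrite expnS in h2; lia.
Qed.

Lemma uniq_leaf b : uniq (leaf_paths b).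
Proof.
elim: b => //= l IHl r IHr; rewrite cat_uniq map_inj_uniq; last by move=> ?? [].
rewrite map_inj_uniq; last by move=> ?? [].
rewrite IHl IHr /= andbT; apply/hasP => -[q /mapP [q1 _ ->] /mapP [q2 _]].
by case.
Qed.

Fixpoint inodes (b : btree) : seq (seq bool) :=
  match b with
  | BLeaf => [::]
  | BNode l r => [::] :: map (cons false) (inodes l) ++ map (cons true) (inodes r)
  end.

Lemma leaves_pos b : 0 < leaves b.
Proof. elim: b => //= l IHl r IHr; rewrite /leaves /= size_cat !size_map -!/(leaves _); lia. Qed.

Lemma size_inodes b : size (inodes b) = (leaves b).-1.
Proof.
elim: b => //= l IHl r IHr; rewrite /leaves /= !size_cat !size_map IHl IHr -!/(leaves _).
have := leaves_pos l; have := leaves_pos r; lia.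
Qed.

Lemma leaf_not_inode b q : q \in leaf_paths b -> q \notin inodes b.
Proof.
elim: b q => [|l IHl r IHr] q /=; first by [].
rewrite mem_cat => /orP [] /mapP [q' Hq' ->]; rewrite in_cons mem_cat /= !negb_or.
- apply/andP; split; apply/negP => /mapP [q2 H2 [E]] //.
  by move: (IHl _ Hq'); rewrite E H2.
- apply/andP; split; apply/negP => /mapP [q2 H2 [E]] //.
  by move: (IHr _ Hq'); rewrite E H2.
Qed.

Definition ptr {n m} (d : bool) (s : sym n m) := if d then rpoint s else lpoint s.

Lemma follow_tree n m (y : cell n m -> sym n m) (G : seq bool -> cell n m) b p :
  (forall p', p' \in inodes b -> forall d, ptr d (y (G (p ++ p'))) = Some (G (p ++ rcons p' d))) ->
  forall q, q \in leaf_paths b -> follow y (G p) q = Some (G (p ++ q)).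
Proof.
elim: b p => [|l IHl r IHr] p H q /=.
  by rewrite inE => /eqP ->; rewrite cats0.
have H0 := H [::] (mem_head _ _); rewrite cats0 /= in H0.
rewrite mem_cat => /orP [] /mapP [q' Hq' ->] /=.
- have := H0 false; rewrite /ptr /= => ->.
  rewrite (_ : p ++ false :: q' = (p ++ [:: false]) ++ q'); last by rewrite -catA.
  apply: IHl => // p' Hp' d; rewrite -!catA /=; apply: H.
  by rewrite /= inE mem_cat map_f.
- have := H0 true; rewrite /ptr /= => ->.
  rewrite (_ : p ++ true :: q' = (p ++ [:: true]) ++ q'); last by rewrite -catA.
  apply: IHr => // p' Hp' d; rewrite -!catA /=; apply: H.
  by rewrite /= inE mem_cat map_f ?orbT.
Qed.


Definition zsym {n m} : sym n m := (false, None, None, None).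
Definition xin n m (f : {ffun 'I_m -> 'I_n}) : cell n m -> sym n m :=
  fun c => if c.1 == f c.2 then zsym else blank.
Definition upd n m (f : {ffun 'I_m -> 'I_n}) (j : 'I_m) (r : 'I_n) : {ffun 'I_m -> 'I_n} :=
  [ffun j' => if j' == j then r else f j'].

Lemma sum_const_seq (T : Type) (R : seq T) (c : nat) : \sum_(r <- R) c = size R * c.
Proof. elim: R => [|a R IH]; rewrite ?big_nil ?big_cons ?IH //=; lia. Qed.

Lemma col_inv n m (t : dtree (cell n m) (sym n m)) (g : {ffun 'I_m -> 'I_n}) (j : 'I_m)
  (R : seq 'I_n) : uniq R -> size R <= n ->
  n * \sum_(r <- R) ((r, j) \in qs t (xin (upd g j r))) + size R * (n - size R)
  <= \sum_(r <- R) (2 * count (fun c : cell n m => c.2 == j) (qs t (xin (upd g j r)))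
                     + 2 * (n - size R)).
Proof.
elim: t R => [b|c k IH] R uR sR.
  rewrite /= big1_seq //= sum_const_seq; lia.
have Eu r : (upd g j r) c.2 = if c.2 == j then r else g c.2 by rewrite ffunE.
case: (eqVneq c.2 j) => Hcj.
- case: c Hcj Eu => i j' /= -> {j'} Eu.
  rewrite eqxx in Eu.
  case Hi: (i \in R).
  + rewrite !(perm_big _ (perm_to_rem Hi)) !big_cons.
    have uR' : uniq (rem i R) by apply: rem_uniq.
    have sR' : size (rem i R) = (size R).-1 by rewrite size_rem.
    have s1 : 0 < size R by case: (R) Hi.
    have := IH blank (rem i R) uR'; rewrite sR' => IH'.
    have {}IH' := IH' ltac:(lia).
    have E1 : \sum_(r <- rem i R) ((r, j) \in qs (DQuery (i, j) k) (xin (upd g j r)))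
       = \sum_(r <- rem i R) ((r, j) \in qs (k blank) (xin (upd g j r))).
      apply: eq_big_seq => r; rewrite mem_rem_uniq // => /andP [ri _].
      have ir : (i == r) = false by rewrite eq_sym (negbTE ri).
      by rewrite /= {1}/xin /= Eu ir in_cons xpair_eqE eqxx andbT (negbTE ri).
    have E2 : \sum_(r <- rem i R) (2 * count (fun c : cell n m => c.2 == j)
                  (qs (DQuery (i, j) k) (xin (upd g j r))) + 2 * (n - size R))
       = \sum_(r <- rem i R) (2 * count (fun c : cell n m => c.2 == j)
                  (qs (k blank) (xin (upd g j r))) + 2 * (n - (size R).-1)).
      apply: eq_big_seq => r; rewrite mem_rem_uniq // => /andP [ri _].
      have ir : (i == r) = false by rewrite eq_sym (negbTE ri).
      rewrite /= {1}/xin /= Eu ir eqxx /=; lia.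
    rewrite E1 E2 /= mem_head eqxx mulnDr /=.
    move: IH'; case Es: (size R) s1 sR => [|s'] // _ sR2.
    have key : s'.+1 * (n - s'.+1) + n <= 2 + 2*(n - s'.+1) + s' * (n - s').
      have [u ->] : exists u, n = s'.+1 + u by exists (n - s'.+1); lia.
      rewrite (_ : s'.+1 + u - s' = u.+1); last lia.
      rewrite (_ : s'.+1 + u - s'.+1 = u); last lia.
      nia.
    rewrite /=; lia.
  + have E1 : \sum_(r <- R) ((r, j) \in qs (DQuery (i, j) k) (xin (upd g j r)))
       = \sum_(r <- R) ((r, j) \in qs (k blank) (xin (upd g j r))).
      apply: eq_big_seq => r rR; have ri : (i == r) = false by apply: contraFF Hi => /eqP ->.
      have ri' : (r == i) = false by rewrite eq_sym.
      by rewrite /= {1}/xin /= Eu ri in_cons xpair_eqE eqxx andbT ri'.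
    rewrite E1; apply: (leq_trans (IH blank R uR sR)); rewrite !big_seq; apply: leq_sum => r rR.
    have ri : (i == r) = false by apply: contraFF Hi => /eqP ->.
    have Ex : xin (upd g j r) (i, j) = blank by rewrite /xin /= Eu ri.
    rewrite /= Ex eqxx /=; lia.
- rewrite (negbTE Hcj) in Eu.
  have Ex r : xin (upd g j r) c = xin g c by rewrite /xin Eu.
  rewrite (eq_bigr (fun r => ((r, j) \in qs (k (xin g c)) (xin (upd g j r))) : nat)); last first.
    move=> r _; rewrite /= Ex in_cons; case: eqP => // E; by rewrite -E eqxx in Hcj.
  apply: (leq_trans (IH _ R uR sR)); apply: leq_sum => r _.
  by rewrite /= Ex (negbTE Hcj).
Qed.


Lemma upd_upd n m (g : {ffun 'I_m -> 'I_n}) j a b : upd (upd g j a) j b = upd g j b.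
Proof. by apply/ffunP => j'; rewrite !ffunE; case: eqP. Qed.

Lemma upd_id n m (g : {ffun 'I_m -> 'I_n}) j : upd g j (g j) = g.
Proof. by apply/ffunP => j'; rewrite !ffunE; case: eqP => // ->. Qed.

Lemma upd_j n m (g : {ffun 'I_m -> 'I_n}) j r : upd g j r j = r.
Proof. by rewrite ffunE eqxx. Qed.

Lemma upd_eq n m (g : {ffun 'I_m -> 'I_n}) j r : (upd g j r == g) = (g j == r).
Proof.
apply/eqP/eqP => [<-|<-]; first by rewrite upd_j.
exact: upd_id.
Qed.

Lemma sum_upd n m (H : {ffun 'I_m -> 'I_n} -> nat) j :
  \sum_(f : {ffun 'I_m -> 'I_n}) \sum_(r : 'I_n) H (upd f j r) = n * \sum_f H f.
Proof.
rewrite exchange_big /=.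
have E r : \sum_(f : {ffun 'I_m -> 'I_n}) H (upd f j r) = n * \sum_(f : {ffun 'I_m -> 'I_n} | f j == r) H f.
  rewrite (partition_big (fun f : {ffun 'I_m -> 'I_n} => f j) predT) //=.
  rewrite (eq_bigr (fun _ => \sum_(f : {ffun 'I_m -> 'I_n} | f j == r) H f)).
    by rewrite sum_nat_const card_ord.
  move=> r' _.
  rewrite (reindex_onto (fun f => upd f j r') (fun f => upd f j r)); last first.
    by move=> f /eqP <-; rewrite upd_upd upd_id.
  apply: eq_big => g; first by rewrite upd_j eqxx upd_upd upd_eq.
  by rewrite upd_j eqxx upd_upd upd_eq => /eqP <-; rewrite upd_id.
rewrite (eq_bigr _ (fun r _ => E r)) -big_distrr /=.
congr (_ * _).
by rewrite [RHS](partition_big (fun f : {ffun 'I_m -> 'I_n} => f j) predT).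
Qed.

Definition Fj n m (t : dtree (cell n m) (sym n m)) (j : 'I_m) (f : {ffun 'I_m -> 'I_n}) : nat :=
  (f j, j) \in qs t (xin f).
Definition cntj n m (t : dtree (cell n m) (sym n m)) (j : 'I_m) (f : {ffun 'I_m -> 'I_n}) : nat :=
  count (fun c : cell n m => c.2 == j) (qs t (xin f)).

Lemma col_sum n m (t : dtree (cell n m) (sym n m)) j : 0 < n ->
  n * \sum_f Fj t j f <= 2 * \sum_f cntj t j f.
Proof.
move=> n0; rewrite -(leq_pmul2l n0) -(sum_upd (Fj t j) j) [X in _ <= X]mulnCA -(sum_upd (cntj t j) j) !big_distrr /=.
apply: leq_sum => f _.
have sz : size (index_enum 'I_n) = n by rewrite /index_enum -enumT -cardT card_ord.
have := col_inv t f j (index_enum_uniq 'I_n) (eq_leq sz).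
rewrite sz subnn !muln0 addn0 => Hc.
rewrite (eq_bigr (fun r => ((r,j) \in qs t (xin (upd f j r))) : nat)) => [|r _]; last by rewrite /Fj upd_j.
apply: leq_trans Hc _; rewrite big_distrr; apply: leq_sum => r _; by rewrite addn0 /cntj.
Qed.


Lemma size_cols n m (s : seq (cell n m)) :
  size s = \sum_(j < m) count (fun c : cell n m => c.2 == j) s.
Proof.
elim: s => [|c s IH] /=; first by rewrite big1.
rewrite big_split /= -IH (bigD1 c.2) //= eqxx big1 ?addn0 // => j.
by rewrite eq_sym => /negbTE ->.
Qed.

Lemma det_bound n m k (t : dtree (cell n m) (sym n m)) : 0 < n -> 2 * k < m ->
  (forall f : {ffun 'I_m -> 'I_n}, n * m <= 8 * size (qs t (xin f)) \/
        m - k <= \sum_j Fj t j f) ->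
  n * m * #|{ffun 'I_m -> 'I_n}| <= 20 * \sum_(f : {ffun 'I_m -> 'I_n}) size (qs t (xin f)).
Proof.
move=> n0 km H.
have HZ : n * \sum_(f : {ffun 'I_m -> 'I_n}) \sum_j Fj t j f
        <= 2 * \sum_(f : {ffun 'I_m -> 'I_n}) size (qs t (xin f)).
  rewrite exchange_big big_distrr /=.
  rewrite (eq_bigr (fun f => \sum_j cntj t j f)); last by move=> f _; rewrite size_cols.
  rewrite exchange_big big_distrr /=; apply: leq_sum => j _; exact: col_sum.
have Hf : forall f : {ffun 'I_m -> 'I_n},
    n * m <= 16 * size (qs t (xin f)) + 2 * n * \sum_j Fj t j f.
  move=> f; case: (H f) => Hc; nia.
have := @leq_sum _ (index_enum {ffun 'I_m -> 'I_n}) predT _ _ (fun f _ => Hf f).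
rewrite sum_nat_const big_split /= -!big_distrr /= -mulnA.
rewrite (_ : #|xpredT| = #|{ffun 'I_m -> 'I_n}|) // => Hs; rewrite mulnC.
move: Hs HZ. set A := \sum_(f : {ffun 'I_m -> 'I_n}) size _. set B := \sum_(f : {ffun 'I_m -> 'I_n}) \sum_j _. set C := #|_|. move=> h1 h2; apply: (leq_trans h1); rewrite mulnA in h2 *; lia.
Qed.


Definition NSof m := behead (inodes (Ttree m)).
Definition inB m k (b : 'I_k -> 'I_m) (j : 'I_m) := [exists s, b s == j].
Definition Aset n m k (f : {ffun 'I_m -> 'I_n}) (Q : seq (cell n m)) (b : 'I_k -> 'I_m)
  : {set cell n m} :=
  [set c : cell n m | ~~ inB b c.2] :\: ([set (f j, j) | j : 'I_m] :|: [set c | c \in Q]).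
Definition Lof n m k (f : {ffun 'I_m -> 'I_n}) Q (b : 'I_k -> 'I_m) := enum (Aset f Q b).
Definition lc n m (f : {ffun 'I_m -> 'I_n}) (c0 : cell n m) (p : seq bool) : cell n m :=
  if [pick j : 'I_m | Tpath j == p] is Some j then (f j, j) else c0.
Definition gof n m k (f : {ffun 'I_m -> 'I_n}) Q (b : 'I_k -> 'I_m) c0 (p : seq bool) :=
  if p \in NSof m then nth c0 (Lof f Q b) (index p (NSof m)) else lc f c0 p.
Definition aof n m k (f : {ffun 'I_m -> 'I_n}) (b : 'I_k -> 'I_m) (s : 'I_k) : cell n m :=
  (f (b s), b s).
Definition yof n m k (f : {ffun 'I_m -> 'I_n}) Q (b : 'I_k -> 'I_m) c0 (c : cell n m)
  : sym n m :=
  match [pick s : 'I_k | aof f b s == c] with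
  | Some s => (true, Some (gof f Q b c0 [:: false]), Some (gof f Q b c0 [:: true]),
               Some (aof f b (ordS s)))
  | None =>
    if index c (Lof f Q b) < size (NSof m) then
      let p := nth [::] (NSof m) (index c (Lof f Q b)) in
      (true, Some (gof f Q b c0 (rcons p false)), Some (gof f Q b c0 (rcons p true)), None)
    else xin f c
  end.

Lemma inA n m k (f : {ffun 'I_m -> 'I_n}) Q (b : 'I_k -> 'I_m) c :
  c \in Aset f Q b -> [/\ ~~ inB b c.2, c.1 != f c.2 & c \notin Q].
Proof.
rewrite !inE negb_or => /andP [/andP [H1 H2] H3].
split => //.
apply: contra H1 => /eqP E; apply/imsetP; exists c.2 => //; move: E; by case: (c) => /= ?? ->.
Qed.

Lemma aof_inB n m k (f : {ffun 'I_m -> 'I_n}) (b : 'I_k -> 'I_m) s : inB b (aof f b s).2.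
Proof. by apply/existsP; exists s. Qed.


Lemma y_notspecial n m k (f : {ffun 'I_m -> 'I_n}) Q (b : 'I_k -> 'I_m) c0 c :
  ~~ inB b c.2 -> yof f Q b c0 c =
    if index c (Lof f Q b) < size (NSof m) then
      let p := nth [::] (NSof m) (index c (Lof f Q b)) in
      (true, Some (gof f Q b c0 (rcons p false)), Some (gof f Q b c0 (rcons p true)), None)
    else xin f c.
Proof.
move=> H; rewrite /yof; case: pickP => // s /eqP E.
by move: H; rewrite -E aof_inB.
Qed.

Lemma y_special n m k (f : {ffun 'I_m -> 'I_n}) Q (b : 'I_k -> 'I_m) c0 s :
  injective b ->
  yof f Q b c0 (aof f b s) = (true, Some (gof f Q b c0 [:: false]), Some (gof f Q b c0 [:: true]),
               Some (aof f b (ordS s))).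
Proof.
move=> ib; rewrite /yof; case: pickP => [s' /eqP E|].
  by have -> : s' = s by apply: ib; move: E => [_].
by move=> /(_ s); rewrite eqxx.
Qed.

Lemma notL_index n m k (f : {ffun 'I_m -> 'I_n}) Q (b : 'I_k -> 'I_m) c :
  size (NSof m) <= size (Lof f Q b) -> c \notin Lof f Q b ->
  (index c (Lof f Q b) < size (NSof m)) = false.
Proof.
move=> sz H; apply/negbTE; rewrite -leqNgt; apply: leq_trans sz _.
by rewrite memNindex.
Qed.

Lemma y_Q n m k (f : {ffun 'I_m -> 'I_n}) Q (b : 'I_k -> 'I_m) c0 c :
  size (NSof m) <= size (Lof f Q b) -> (forall s, aof f b s \notin Q) ->
  c \in Q -> yof f Q b c0 c = xin f c.
Proof.
move=> sz Ha cQ; rewrite /yof; case: pickP => [s /eqP E|_].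
  by move: (Ha s); rewrite E cQ.
rewrite notL_index //; apply/negP; rewrite mem_enum => /inA [_ _]; by rewrite cQ.
Qed.

Lemma y_col_notB n m k (f : {ffun 'I_m -> 'I_n}) Q (b : 'I_k -> 'I_m) c0 j :
  size (NSof m) <= size (Lof f Q b) -> ~~ inB b j -> yof f Q b c0 (f j, j) = zsym.
Proof.
move=> sz H; rewrite y_notspecial //= notL_index //; first by rewrite /xin /= eqxx.
by apply/negP; rewrite mem_enum => /inA [_ /=]; rewrite eqxx.
Qed.

Lemma y_col_B n m k (f : {ffun 'I_m -> 'I_n}) Q (b : 'I_k -> 'I_m) c0 s i :
  size (NSof m) <= size (Lof f Q b) -> i != f (b s) -> yof f Q b c0 (i, b s) = blank.
Proof.
move=> sz H; rewrite /yof; case: pickP => [s' /eqP [E1 E2]|_].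
  by move: H; rewrite -E1 E2 eqxx.
rewrite notL_index /xin /= ?(negbTE H) //.
apply/negP; rewrite mem_enum => /inA [/= + _ _]; by rewrite /inB; move/existsP; apply; exists s.
Qed.

Lemma g_NS n m k (f : {ffun 'I_m -> 'I_n}) Q (b : 'I_k -> 'I_m) c0 p :
  size (NSof m) <= size (Lof f Q b) -> p \in NSof m ->
  yof f Q b c0 (gof f Q b c0 p) =
  (true, Some (gof f Q b c0 (rcons p false)), Some (gof f Q b c0 (rcons p true)), None).
Proof.
move=> sz pN.
have iN : index p (NSof m) < size (NSof m) by rewrite index_mem.
have iL : index p (NSof m) < size (Lof f Q b) by apply: leq_trans sz.
have cL : gof f Q b c0 p \in Lof f Q b by rewrite /gof pN mem_nth.
have E : index (gof f Q b c0 p) (Lof f Q b) = index p (NSof m).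
  by rewrite /gof pN index_uniq // enum_uniq.
move: (cL); rewrite mem_enum => /inA [nB _ _].
by rewrite y_notspecial // E iN /= nth_index.
Qed.

Lemma size_leaf_T m : 0 < m -> size (leaf_paths (Ttree m)) = m.
Proof. exact: leaves_Ttree. Qed.

Lemma Tpath_mem m (j : 'I_m) : Tpath j \in leaf_paths (Ttree m).
Proof. rewrite /Tpath mem_nth // size_leaf_T //; exact: leq_ltn_trans (ltn_ord j). Qed.

Lemma Tpath_inj m : injective (@Tpath m).
Proof.
move=> j1 j2 E; apply/val_inj/eqP.
have m0 : 0 < m by exact: leq_ltn_trans (ltn_ord j1).
rewrite -(nth_uniq [::] _ _ (uniq_leaf (Ttree m))) ?size_leaf_T //.
by move: E; rewrite /Tpath => ->.
exact: ltn_ord.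
exact: ltn_ord.
Qed.

Lemma Ttree_node m : 2 <= m -> exists l r, Ttree m = BNode l r.
Proof.
move=> m2; case E: (Ttree m) => [|l r]; last by exists l, r.
by have := size_leaf_T (ltnW m2); rewrite E /= => Em; rewrite -Em in m2.
Qed.

Lemma Tpath_cons m (j : 'I_m) : 2 <= m -> exists d p, Tpath j = d :: p.
Proof.
move=> m2; have [l [r E]] := Ttree_node m2; have := Tpath_mem j; rewrite E /=.
rewrite mem_cat => /orP [] /mapP [p _ ->]; by do 2 eexists.
Qed.

Lemma inodes_NS m p : p \in inodes (Ttree m) -> p != [::] -> p \in NSof m.
Proof. rewrite /NSof; case: (Ttree m) => //= l r; by rewrite in_cons => /orP [->|]. Qed.

Lemma size_NS m : 2 <= m -> size (NSof m) = m - 2.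
Proof.
move=> m2; have [l [r E]] := Ttree_node m2.
have := size_inodes (Ttree m); rewrite /NSof /leaves size_leaf_T ?(ltnW m2) // E /= => Hs; lia.
Qed.

Lemma g_leaf n m k (f : {ffun 'I_m -> 'I_n}) Q (b : 'I_k -> 'I_m) c0 (j : 'I_m) :
  gof f Q b c0 (Tpath j) = (f j, j).
Proof.
rewrite /gof ifF; last first.
  apply/negbTE; apply: contra (leaf_not_inode (Tpath_mem j)); exact: mem_behead.
rewrite /lc; case: pickP => [j' /eqP /Tpath_inj -> //|/(_ j)]; by rewrite eqxx.
Qed.

Lemma y_holds n m k (f : {ffun 'I_m -> 'I_n}) Q (b : 'I_k -> 'I_m) c0 :
  2 <= m -> injective b -> size (NSof m) <= size (Lof f Q b) ->
  h_holds k n m (yof f Q b c0).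
Proof.
move=> m2 ib sz.
have Mb : forall s, marked (yof f Q b c0) (b s).
  move=> s i; case: (eqVneq i (f (b s))) => [->|ne].
    by rewrite (_ : (f (b s), b s) = aof f b s) // y_special.
  by rewrite y_col_B.
have Mnb : forall j, ~~ inB b j -> ~ marked (yof f Q b c0) j.
  by move=> j Hj Hm; have := Hm (f j); rewrite y_col_notB.
have Mc : forall j, marked (yof f Q b c0) j -> inB b j.
  by move=> j Hm; case H: (inB b j) => //; exfalso; apply: (Mnb j) => //; rewrite H.
exists b, (aof f b); split => //; split.
  move=> j; split.
    by move=> Hm; have /existsP [s /eqP <-] := Mc _ Hm; exists s.
  by move=> [s <-]; apply: Mb.
split.
  move=> s; split => //; split; first by rewrite y_special.
  move=> i; case: (eqVneq i (f (b s))) => [-> //|ne]; by rewrite y_col_B.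
split; first by move=> s; rewrite y_special.
split; first by move=> s t; rewrite !y_special.
move=> j Hj s.
have nB : ~~ inB b j by apply/negP => /existsP [s' /eqP E]; apply: Hj; rewrite -E; apply: Mb.
pose G := fun p : seq bool => if p is [::] then aof f b s else gof f Q b c0 p.
have HG : forall p', p' \in inodes (Ttree m) -> forall d,
    ptr d (yof f Q b c0 (G ([::] ++ p'))) = Some (G ([::] ++ rcons p' d)).
  move=> p' Hp' d /=; case: p' Hp' => [|x p''] Hp' /=.
    by rewrite y_special; case: d.
  rewrite g_NS //; last by apply: inodes_NS.
  by case: d.
have := follow_tree HG (Tpath_mem j).
have [d [p Ep]] := Tpath_cons j m2.
rewrite /= Ep /= -Ep g_leaf => ->.
exists (f j, j); split => //; split => //.
by rewrite y_col_notB.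
Qed.


Lemma In_mem (T : eqType) (c : T) s : List.In c s -> c \in s.
Proof. elim: s => //= a s IH [->|H]; rewrite in_cons ?eqxx // IH ?orbT //. Qed.

Lemma h_false n m k (f : {ffun 'I_m -> 'I_n}) : 0 < k -> ~ h_holds k n m (xin f).
Proof.
move=> k0 [b [a [_ [Hm _]]]].
have := proj2 (Hm (b (Ordinal k0))) (ex_intro _ _ erefl) (f (b (Ordinal k0))).
by rewrite /xin /= eqxx.
Qed.

Lemma sum_bool_card (T : finType) (P : pred T) : \sum_(j : T) (P j : nat) = #|P|.
Proof.
rewrite -sum1_card [RHS]big_mkcond /=; apply: eq_bigr => j _; by rewrite unfold_in; case: (P j).
Qed.

Lemma adversary n m k (t : dtree (cell n m) (sym n m)) :
  8 <= n -> 8 <= m -> 1 <= k -> 2 * k < m ->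
  (forall x, dt_eval t x = true <-> h_holds k n m x) ->
  forall f : {ffun 'I_m -> 'I_n},
    n * m <= 8 * size (qs t (xin f)) \/ m - k <= \sum_j Fj t j f.
Proof.
move=> n8 m8 k1 km Ht f.
case: (leqP (n * m) (8 * size (qs t (xin f)))) => [H|HQ]; first by left.
case: (leqP (m - k) (\sum_j Fj t j f)) => [H|HZ]; first by right.
exfalso.
set Q := qs t (xin f) in HQ HZ *.
pose U := [set j : 'I_m | (f j, j) \notin Q].
have cU : #|U| = m - \sum_j Fj t j f.
  rewrite /Fj -/Q (sum_bool_card (fun j : 'I_m => (f j, j) \in Q)).
  have E := cardC (fun j : 'I_m => (f j, j) \in Q); rewrite card_ord in E.
  have E1 : #|U| = #|[predC (fun j : 'I_m => (f j, j) \in Q)]|.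
    by apply: eq_card => j; rewrite !inE.
  rewrite E1; move: E; set a := #|[predC _]|; set c := #|_|; move=> E; lia.
have kU : k <= #|U| by lia.
pose b := fun s : 'I_k => @enum_val _ (mem U) (widen_ord kU s).
have ib : injective b.
  move=> s1 s2 /enum_val_inj E; apply/val_inj; move: E => /(congr1 val) //.
have bU : forall s, aof f b s \notin Q.
  move=> s; have := @enum_valP _ (mem U) (widen_ord kU s); by rewrite inE.
pose c0 := aof f b (Ordinal k1).
pose Bs := [set b s | s in 'I_k].
have cB : #|Bs| = k by rewrite card_imset // card_ord.
have inBE : forall j, inB b j = (j \in Bs).
  move=> j; apply/existsP/imsetP => [[s /eqP <-]|[s _ ->]]; by exists s.
have cS0 : #|[set c : cell n m | ~~ inB b c.2]| = n * (m - k).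
  have -> : [set c : cell n m | ~~ inB b c.2] = setX [set: 'I_n] (~: Bs).
    by apply/setP => -[i j]; rewrite !inE inBE.
  rewrite cardsX cardsT card_ord; congr (_ * _).
  have := cardsC Bs; rewrite card_ord cB; lia.
have cZ : #|[set (f j, j) | j : 'I_m]| <= m.
  by apply: leq_trans (leq_imset_card _ _) _; rewrite card_ord.
have cQ : #|[set c | c \in Q]| <= size Q by rewrite cardsE card_size.
have cA : n * (m - k) - (m + size Q) <= #|Aset f Q b|.
  rewrite /Aset cardsD -cS0.
  have := subset_leq_card (subsetIr [set c : cell n m | ~~ inB b c.2]
             ([set (f j, j) | j : 'I_m] :|: [set c | c \in Q])).
  rewrite cardsU => H1; apply: leq_sub2l; apply: leq_trans H1 _; apply: leq_trans (leq_subr _ _) _; exact: leq_add.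
have sz : size (NSof m) <= size (Lof f Q b).
  rewrite size_NS; last lia.
  rewrite /Lof -cardE; apply: leq_trans cA.
  have h1 : n * (m + 1) <= n * (2 * (m - k)) by rewrite leq_mul2l; apply/orP; right; lia.
  have h2 : 8 * m <= n * m by rewrite leq_mul2r n8 orbT.
  rewrite mulnDr mulnCA in h1; lia.
have m2 : 2 <= m by lia.
have Hy := y_holds c0 m2 ib sz.
have := proj2 (Ht _) Hy.
rewrite (eval_agree (x := xin f)).
  by move/Ht; apply: h_false.
by move=> c /In_mem cQ'; apply: y_Q.
Qed.


Definition sumR {T} (s : seq T) (F : T -> R) : R := foldr (fun a acc => Rplus (F a) acc) R0 s.

Lemma sumR_INR {T} (s : seq T) (h : T -> nat) :
  sumR s (fun x => INR (h x)) = INR (\sum_(x <- s) h x).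
Proof. elim: s => [|a s IH]; rewrite ?big_nil ?big_cons //= IH plus_INR //. Qed.


Lemma sumR_split {T} (s : seq T) (F G : T -> R) :
  sumR s (fun x => Rplus (F x) (G x)) = Rplus (sumR s F) (sumR s G).
Proof. elim: s => [|a s IH] /=; [lra|rewrite IH; lra]. Qed.

Lemma sumR_scal {T} (s : seq T) (w : R) (F : T -> R) :
  sumR s (fun x => Rmult w (F x)) = Rmult w (sumR s F).
Proof. elim: s => [|a s IH] /=; [lra|rewrite IH; lra]. Qed.

Lemma sumR_exists {T} (s : seq T) (F : T -> R) (a : R) :
  s <> [::] -> Rle (Rmult (INR (size s)) a) (sumR s F) -> exists x, Rle a (F x).
Proof.
elim: s => [|x s IH] // _ H.
case: (Rle_dec a (F x)) => Hx; first by exists x.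
have E : size (x :: s) = (size s).+1 by [].
rewrite E S_INR in H.
case: s IH H E => [|y s] IH H E.
  move: H; rewrite /=; nra.
apply: IH => //; move: H; rewrite Rmult_plus_distr_r Rmult_1_l [sumR (x :: _) F]/= -/(sumR _ _) => H; have -> : sumR (y :: s) F = Rplus (F y) (sumR s F) by []; lra.
Qed.

Lemma sumR_0 {T} (s : seq T) : sumR s (fun _ => R0) = R0.
Proof. elim: s => //= a s ->; lra. Qed.

Theorem theorem15 :
  exists c : R, Rlt R0 c /\
  exists N : nat, forall n m k : nat,
    N <= n -> N <= m -> 1 <= k -> 2 * k < m ->
    forall D : rdtree (cell n m) (sym n m),
      zero_error_for (h_holds k n m) D ->
      exists x : cell n m -> sym n m,
        Rle (Rmult (Rmult c (INR n)) (INR m)) (exp_cost D x).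
Proof.
exists (Rinv (IZR 20%Z)); split; first lra.
exists 8 => n m k n8 m8 k1 km D [HD HW].
pose FF := index_enum {ffun 'I_m -> 'I_n}.
pose K := INR (n * m * #|{ffun 'I_m -> 'I_n}|).
have key : forall D' : rdtree (cell n m) (sym n m),
    (forall wt, List.In wt D' -> Rle R0 wt.1 /\
                 forall x, dt_eval wt.2 x = true <-> h_holds k n m x) ->
    Rle (Rmult (total_weight D') (Rmult K (Rinv (IZR 20%Z)))) (sumR FF (fun f => exp_cost D' (xin f))).
  elim=> [|[w t] D' IH] H /=.
    rewrite sumR_0; lra.
  have [w0 Ht] := H (w, t) (or_introl erefl).
  have {}IH := IH (fun wt Hin => H wt (or_intror Hin)).
  rewrite sumR_split sumR_scal.
  rewrite (_ : sumR FF (fun x => INR (dt_cost t (xin x))) = INR (\sum_(f <- FF) size (qs t (xin f)))); last first.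
    rewrite -sumR_INR; congr sumR; apply: functional_extensionality => f; by rewrite cost_qs.
  have n0 : 0 < n by lia.
  have Hb := det_bound n0 km (adversary n8 m8 k1 km Ht).
  have Hb' : Rle K (Rmult (IZR 20%Z) (INR (\sum_(f <- FF) size (qs t (xin f))))).
    rewrite /K (_ : IZR 20%Z = INR 20); last by rewrite /=; lra.
    rewrite -mult_INR; apply: le_INR; apply/leP; exact: Hb.
  rewrite /= in w0.
  have : Rle (Rmult w (Rmult K (Rinv (IZR 20%Z)))) (Rmult w (INR (\sum_(f <- FF) size (qs t (xin f))))).
    apply: Rmult_le_compat_l => //; lra.
  move=> ?; rewrite Rmult_plus_distr_r; exact: Rplus_le_compat.
have := key D HD; rewrite HW Rmult_1_l => Hs.
have cF : #|{ffun 'I_m -> 'I_n}| = size FF by rewrite /FF /index_enum -enumT -cardT.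
have FF0 : FF <> [::].
  move=> E; move: cF; rewrite E card_ffun !card_ord /=; move/eqP; rewrite expn_eq0; lia.
have [f Hf] : exists f : {ffun 'I_m -> 'I_n},
    Rle (Rmult (Rmult (Rinv (IZR 20%Z)) (INR n)) (INR m)) (exp_cost D (xin f)).
  apply: (sumR_exists FF0).
  move: Hs; rewrite /K cF !mult_INR => Hs.
  apply: Rle_trans Hs; apply: Req_le; ring.
by exists (xin f).
Qed.
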